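(* Let $a_0,a_1,a_2\in\mathbb{C}$ with $a_2\neq0$ such that the polynomial $f(x)=a_0+a_1x+a_2x^2$ has no positive integer root, and let $\Lambda=a_0D+a_1DxD+a_2(Dx)^2D$. Then there is no monic polynomial sequence $\{B_n\}_{n\ge0}$ which is both $\Lambda$-Appell and orthogonal.
   Context: $\mathcal{P}$ is the space of complex polynomials, $D$ the derivative, $x$ multiplication by $x$, products are compositions. A monic polynomial sequence (MPS) is $\{B_n\}_{n\ge0}$ with $B_n$ monic of degree $n$. Under the hypotheses, $\Lambda$ is a lowering operator with $\Lambda(x^n)=nf(n)x^{n-1}$; an MPS is $\Lambda$-Appell if $\Lambda B_{n+1}=\rho_nB_n$ for all $n\ge0$ with $\rho_n=(n+1)f(n+1)$. An MPS is orthogonal if there is a linear functional $u$ on $\mathcal{P}$ with $\langle u,B_nB_m\rangle=0$ for $n\neq m$ and $\langle u,B_n^2\rangle\neq0$ for all $n\ge0$. *)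

(* Defs.v *)
From mathcomp Require Import all_boot all_algebra.
From mathcomp Require Import complex Rstruct.
Set Implicit Arguments. Unset Strict Implicit. Unset Printing Implicit Defensive.
Import GRing.Theory.
Local Open Scope ring_scope.

Definition C : numClosedFieldType := (Rdefinitions.R)[i].

Definition fpoly (a0 a1 a2 : C) : {poly C} := a0%:P + a1 *: 'X + a2 *: 'X^2.

(* Lambda = a0 D + a1 D x D + a2 (D x)^2 D, products = compositions,
   D = derivative, x = multiplication by 'X. *)
Definition Lambda (a0 a1 a2 : C) (p : {poly C}) : {poly C} :=
  a0 *: p^`() + a1 *: ('X * p^`())^`() + a2 *: ('X * ('X * p^`())^`())^`().

Definition rho (a0 a1 a2 : C) (n : nat) : C :=
  n.+1%:R * (fpoly a0 a1 a2).[n.+1%:R].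

Definition MPS (B : nat -> {poly C}) : Prop :=
  forall n, B n \is monic /\ size (B n) = n.+1.

Definition Lambda_Appell (a0 a1 a2 : C) (B : nat -> {poly C}) : Prop :=
  forall n, Lambda a0 a1 a2 (B n.+1) = rho a0 a1 a2 n *: B n.

Definition orthogonal_MPS (B : nat -> {poly C}) : Prop :=
  exists u : {linear {poly C} -> C^o},
    (forall n m : nat, n <> m -> u (B n * B m) = 0) /\
    (forall n : nat, u (B n * B n) != 0).

(* Main.v *)
Require Import Defs.
From mathcomp Require Import all_boot all_algebra.
From mathcomp Require Import complex Rstruct.
From mathcomp Require Import ring zify.
Import GRing.Theory Num.Theory.
Local Open Scope ring_scope.
Set Implicit Arguments. Unset Strict Implicit.

Definition rr (a0 a1 a2 : C) (m : nat) : C := m%:R * (fpoly a0 a1 a2).[m%:R].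

Lemma rrE a0 a1 a2 m : rr a0 a1 a2 m = m%:R * (a0 + a1 * m%:R + a2 * m%:R ^+ 2).
Proof. by rewrite /rr /fpoly !hornerE. Qed.
Lemma coefXMS (q : {poly C}) i : ('X * q)`_i.+1 = q`_i.
Proof. by rewrite coefXM. Qed.
Lemma coef_Lambda a0 a1 a2 p i :
  (Lambda a0 a1 a2 p)`_i = rr a0 a1 a2 i.+1 * p`_i.+1.
Proof.
rewrite /Lambda !coefD !coefZ !coef_deriv !coefXMS !coef_deriv !coefXMS !coef_deriv rrE.
ring.
Qed.

Lemma rr_neq0 a0 a1 a2 m :
  (forall n : nat, (0 < n)%N -> ~~ root (fpoly a0 a1 a2) n%:R) ->
  (0 < m)%N -> rr a0 a1 a2 m != 0.
Proof.
move=> hf hm; rewrite /rr mulf_neq0 //; last exact: hf.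
by rewrite pnatr_eq0 -lt0n.
Qed.

Fixpoint Rk a0 a1 a2 (k n : nat) : C :=
  if k is k'.+1 then rr a0 a1 a2 n * Rk a0 a1 a2 k' n.-1 else 1.

Lemma Rk_neq0 a0 a1 a2 k n :
  (forall n : nat, (0 < n)%N -> ~~ root (fpoly a0 a1 a2) n%:R) ->
  (k <= n)%N -> Rk a0 a1 a2 k n != 0.
Proof.
move=> hf; elim: k n => [|k IH] n hk /=; first exact: oner_neq0.
rewrite mulf_neq0 //; first by apply: rr_neq0 => //; lia.
apply: IH; lia.
Qed.

Lemma RkS a0 a1 a2 k n :
  Rk a0 a1 a2 k.+1 n = Rk a0 a1 a2 k n * rr a0 a1 a2 (n - k).
Proof.
elim: k n => [|k IH] n; first by rewrite /= mul1r mulr1 subn0.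
rewrite -[LHS]/(rr a0 a1 a2 n * Rk a0 a1 a2 k.+1 n.-1) IH.
rewrite -[Rk _ _ _ k.+1 n]/(rr a0 a1 a2 n * Rk a0 a1 a2 k n.-1) mulrA.
congr (_ * rr _ _ _ _); lia.
Qed.

Lemma Rk_shift a0 a1 a2 k n :
  Rk a0 a1 a2 k n.+1 * rr a0 a1 a2 (n.+1 - k) = rr a0 a1 a2 n.+1 * Rk a0 a1 a2 k n.
Proof.
case: k => [|k]; first by rewrite /= mul1r mulr1 subn0.
rewrite [Rk _ _ _ k.+1 n.+1]/= subSS -mulrA -RkS //.
Qed.

Definition alpha (B : nat -> {poly C}) a0 a1 a2 k := (B k)`_0 / Rk a0 a1 a2 k k.

Lemma cf a0 a1 a2 (B : nat -> {poly C}) :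
  (forall n : nat, (0 < n)%N -> ~~ root (fpoly a0 a1 a2) n%:R) ->
  Lambda_Appell a0 a1 a2 B ->
  forall k m, (B (k + m)%N)`_m = alpha B a0 a1 a2 k * Rk a0 a1 a2 k (k + m)%N.
Proof.
move=> hf hA k; elim=> [|m IH].
  rewrite addn0 /alpha divfK //; exact: (Rk_neq0 hf (leqnn k)).
rewrite addnS.
have h := congr1 (fun p : {poly C} => p`_m) (hA (k+m)%N).
rewrite /= coef_Lambda coefZ IH in h.
apply: (mulfI (rr_neq0 hf (ltn0Sn m))).
rewrite h.
have hs := Rk_shift a0 a1 a2 k (k+m)%N.
have e : ((k+m).+1 - k)%N = m.+1 by lia.
rewrite e in hs.
have hr : rho a0 a1 a2 (k+m)%N = rr a0 a1 a2 (k+m)%N.+1 by [].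
by rewrite hr mulrCA -hs; ring.
Qed.

Lemma uZ (u : {linear {poly C} -> C^o}) (c : C) p : u (c *: p) = c * u p.
Proof. by rewrite linearZ. Qed.

Lemma uZM (u : {linear {poly C} -> C^o}) (c : C) (p q : {poly C}) :
  u ((c *: p) * q) = c * u (p * q).
Proof. by rewrite -scalerAl linearZ. Qed.

Lemma uBM (u : {linear {poly C} -> C^o}) (c : C) (p r q : {poly C}) :
  u ((p - c *: r) * q) = u (p * q) - c * u (r * q).
Proof. by rewrite mulrBl linearB -scalerAl linearZ. Qed.

Lemma B_lead (B : nat -> {poly C}) n : MPS B -> (B n)`_n = 1.
Proof.
move=> hM; case: (hM n) => hm hs.
by move/monicP: hm; rewrite lead_coefE hs.
Qed.

Lemma B_high (B : nat -> {poly C}) n i : MPS B -> (n < i)%N -> (B n)`_i = 0.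
Proof.
move=> hM hi; case: (hM n) => _ hs.
by apply: nth_default; rewrite hs.
Qed.

Lemma red_size (B : nat -> {poly C}) m (q : {poly C}) : MPS B ->
  (size q <= m.+1)%N -> (size (q - q`_m *: B m)%R <= m)%N.
Proof.
move=> hM hq; apply/leq_sizeP => j hj.
rewrite coefB coefZ.
case: (ltngtP j m) => hjm; first lia.
  by rewrite (B_high hM hjm) mulr0 subr0; apply: (leq_sizeP _ _ hq).
by rewrite hjm (B_lead _ hM) mulr1 subrr.
Qed.

Lemma orth_low (B : nat -> {poly C}) (u : {linear {poly C} -> C^o}) :
  MPS B -> (forall n m : nat, n <> m -> u (B n * B m) = 0) ->
  forall m (q : {poly C}) n, (size q <= m)%N -> (m <= n)%N -> u (q * B n) = 0.
Proof.
move=> hM ho; elim=> [|m IH] q n hq hmn.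
  move: hq; rewrite leqn0 size_poly_eq0 => /eqP ->.
  by rewrite mul0r raddf0.
have hs : (size (q - q`_m *: B m)%R <= m)%N by exact: red_size.
have h1 := IH _ n hs (ltnW hmn).
rewrite uBM ho in h1; last lia.
by rewrite mulr0 subr0 in h1.
Qed.

Lemma GS (B : nat -> {poly C}) (u : {linear {poly C} -> C^o}) :
  MPS B -> (forall n m : nat, n <> m -> u (B n * B m) = 0) ->
  (forall n : nat, u (B n * B n) != 0) ->
  forall m (p : {poly C}), (size p <= m)%N -> (forall j, (j < m)%N -> u (p * B j) = 0) -> p = 0.
Proof.
move=> hM ho hn; elim=> [|m IH] p hp hj.
  by move: hp; rewrite leqn0 size_poly_eq0 => /eqP.
have hq : p - p`_m *: B m = 0.
  apply: IH; first by exact: red_size.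
  move=> j hjm; rewrite uBM ho; last lia.
  by rewrite hj ?mulr0 ?subr0 //; lia.
have hpe : p = p`_m *: B m by apply/eqP; rewrite -subr_eq0 hq.
have := hj m (ltnSn m); rewrite hpe uZM => /eqP.
rewrite mulf_eq0 (negbTE (hn m)) orbF => /eqP c0.
by rewrite c0 scale0r.
Qed.

Lemma uB (u : {linear {poly C} -> C^o}) (p r q : {poly C}) :
  u ((p - r) * q) = u (p * q) - u (r * q).
Proof. by rewrite mulrBl linearB. Qed.

Lemma uXM (u : {linear {poly C} -> C^o}) (p r : {poly C}) :
  u (('X * p) * r) = u (('X * r) * p).
Proof. by rewrite mulrAC. Qed.

Definition beta (B : nat -> {poly C}) n := (B n.+1)`_n - (B n.+2)`_n.+1.
Definition gamma (B : nat -> {poly C}) n :=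
  (B n.+1)`_n.-1 - (B n.+2)`_n - beta B n * (B n.+1)`_n.

Lemma rec_coef (B : nat -> {poly C}) (u : {linear {poly C} -> C^o}) :
  MPS B -> (forall n m : nat, n <> m -> u (B n * B m) = 0) ->
  (forall n : nat, u (B n * B n) != 0) ->
  forall n j, (0 < n)%N ->
  (B n.+1)`_j - (B n.+2)`_j.+1 - beta B n * (B n.+1)`_j.+1 - gamma B n * (B n)`_j.+1 = 0.
Proof.
move=> hM ho hn n j hn0.
set R := 'X * B n.+1 - B n.+2 - beta B n *: B n.+1 - gamma B n *: B n.
have hR : R = 0.
  apply: (GS hM ho hn (m := n)).
    apply/leq_sizeP => i hi.
    case: n hn0 @R hi => [//|n'] _ R hi.
    case: i hi => [//|i] hi.
    rewrite /R !coefB !coefZ coefXMS.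
    have [->|[->|[->|hlt]]] : i = n' \/ i = n'.+1 \/ i = n'.+2 \/ (n'.+2 < i)%N by lia.
    - rewrite (B_lead _ hM) /gamma /=; ring.
    - rewrite (B_lead _ hM) (B_high hM (ltnSn _)) /beta; ring.
    - rewrite !(B_lead _ hM) (B_high hM (ltnSn _)) (B_high hM (leqnSn _)).
      ring.
    - rewrite (B_high hM hlt) (B_high hM (_ : n'.+3 < i.+1)%N) ?(B_high hM (_ : n'.+2 < i.+1)%N)
        ?(B_high hM (_ : n'.+1 < i.+1)%N); try lia.
      ring.
  move=> i hi; rewrite /R !uBM uB uXM.
  rewrite (orth_low hM ho (m := i.+2)); last lia.
    rewrite !ho; try lia; ring.
  apply: (leq_trans (size_polyMleq _ _)).
  by case: (hM i) => _ ->; rewrite size_polyX.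
have := congr1 (fun p : {poly C} => p`_j.+1) hR.
by rewrite /R /= !coefB !coefZ coefXMS coef0.
Qed.

Definition E3f a0 a1 a2 (x1 x2 x3 : C) m :=
  x3 * (rr a0 a1 a2 m.+1 - rr a0 a1 a2 m.+4)
  - x1 * x2 * (rr a0 a1 a2 m.+3 - rr a0 a1 a2 m.+4)
  - x1 * x2 * (rr a0 a1 a2 m.+2 - rr a0 a1 a2 m.+4)
  + x1 ^+ 3 * (rr a0 a1 a2 m.+3 - rr a0 a1 a2 m.+4).

Definition G4f a0 a1 a2 (x2 x4 : C) m :=
  x4 * (rr a0 a1 a2 m.+1 - rr a0 a1 a2 m.+4.+1)
  - x2 ^+ 2 * (rr a0 a1 a2 m.+3 - rr a0 a1 a2 m.+4.+1).

Lemma natC_neq0 n : ((n.+1)%:R : C) != 0.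
Proof. by rewrite pnatr_eq0. Qed.

Lemma mul_eq0_r (c y : C) : c != 0 -> c * y = 0 -> y = 0.
Proof. by move=> hc /eqP; rewrite mulf_eq0 (negbTE hc) => /eqP. Qed.

Lemma alg1 a0 a1 a2 x1 x2 x3 : a2 != 0 ->
  E3f a0 a1 a2 x1 x2 x3 0 = 0 -> E3f a0 a1 a2 x1 x2 x3 1 = 0 ->
  E3f a0 a1 a2 x1 x2 x3 2 = 0 -> x1 = 0.
Proof.
move=> ha e0 e1 e2.
set T := 3%:R * x3 - 3%:R * x1 * x2 + x1 ^+ 3.
have kT : (6%:R * a2) * T = - (E3f a0 a1 a2 x1 x2 x3 0 - 2%:R * E3f a0 a1 a2 x1 x2 x3 1
   + E3f a0 a1 a2 x1 x2 x3 2).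
  rewrite /T /E3f !rrE; ring.
rewrite e0 e1 e2 in kT.
have T0 : T = 0.
  move/eqP: kT; rewrite ?mulr0 ?subr0 ?addr0 ?oppr0 !mulf_eq0 (negbTE ha) (negbTE (natC_neq0 5)) /=.
  by move/eqP.
set U := 2%:R * x1 * x2 - x1 ^+ 3.
have kU : (18%:R * a2) * U = 3%:R * (E3f a0 a1 a2 x1 x2 x3 1 - E3f a0 a1 a2 x1 x2 x3 0)
   + T * (54%:R * a2 + 6%:R * a1).
  rewrite /T /U /E3f !rrE; ring.
rewrite e0 e1 T0 in kU.
have U0 : U = 0.
  move/eqP: kU; rewrite ?subrr ?mulr0 ?mul0r ?subr0 ?addr0 !mulf_eq0 (negbTE ha) (negbTE (natC_neq0 17)) /=.
  by move/eqP.
have kV : (- 6%:R * a2) * (x1 * x2) = 3%:R * E3f a0 a1 a2 x1 x2 x3 0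
   + T * (63%:R * a2 + 15%:R * a1 + 3%:R * a0) - U * (48%:R * a2 + 6%:R * a1).
  rewrite /T /U /E3f !rrE; ring.
rewrite e0 T0 U0 ?mulr0 ?mul0r ?subr0 ?addr0 in kV.
have V0 : x1 * x2 = 0.
  apply: (mul_eq0_r _ kV).
  by rewrite mulf_neq0 // oppr_eq0 (natC_neq0 5).
move: U0; rewrite /U -mulrA V0 mulr0 sub0r => /eqP; rewrite oppr_eq0 expf_eq0 /=.
by move/eqP.
Qed.

Lemma alg2 a0 a1 a2 x2 x4 : a2 != 0 ->
  G4f a0 a1 a2 x2 x4 0 = 0 -> G4f a0 a1 a2 x2 x4 1 = 0 ->
  G4f a0 a1 a2 x2 x4 2 = 0 -> x2 = 0.
Proof.
move=> ha e0 e1 e2.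
set V := x2 ^+ 2 - 2%:R * x4.
have kV : (12%:R * a2) * V = G4f a0 a1 a2 x2 x4 0 - 2%:R * G4f a0 a1 a2 x2 x4 1
   + G4f a0 a1 a2 x2 x4 2.
  rewrite /V /G4f !rrE; ring.
rewrite e0 e1 e2 ?mulr0 ?subr0 ?addr0 in kV.
have V0 : V = 0.
  move/eqP: kV; rewrite !mulf_eq0 (negbTE ha) (negbTE (natC_neq0 11)) /=.
  by move/eqP.
have k4 : (24%:R * a2) * x4 = G4f a0 a1 a2 x2 x4 1 - G4f a0 a1 a2 x2 x4 0
   - V * (4%:R * a1 + 54%:R * a2).
  rewrite /V /G4f !rrE; ring.
rewrite e0 e1 V0 ?mul0r ?subr0 in k4.
have x40 : x4 = 0.
  move/eqP: k4; rewrite !mulf_eq0 (negbTE ha) (negbTE (natC_neq0 23)) /=.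
  by move/eqP.
move: V0; rewrite /V x40 mulr0 subr0 => /eqP; rewrite expf_eq0 /=.
by move/eqP.
Qed.


Theorem theorem3 (a0 a1 a2 : C) :
  a2 != 0 ->
  (forall n : nat, (0 < n)%N -> ~~ root (fpoly a0 a1 a2) n%:R) ->
  ~ (exists B : nat -> {poly C},
        MPS B /\ Lambda_Appell a0 a1 a2 B /\ orthogonal_MPS B).
Proof.
move=> ha2 hf [B [hM [hA [u [ho hn]]]]].
have cfk := cf hf hA.
have rc := rec_coef hM ho hn.
pose x := alpha B a0 a1 a2.
have rnz : forall m, rr a0 a1 a2 m.+1 != 0 := fun m => rr_neq0 hf (ltn0Sn m).
have E3 : forall m, E3f a0 a1 a2 (x 1) (x 2) (x 3) m = 0.
  move=> m; have h := rc m.+2 m isT.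
  rewrite /gamma /beta in h.
  have c1 : (B m.+3)`_m = x 3 * (rr a0 a1 a2 m.+3 * (rr a0 a1 a2 m.+2 * (rr a0 a1 a2 m.+1 * 1))) := cfk 3 m.
  have c2 : (B m.+4)`_m.+1 = x 3 * (rr a0 a1 a2 m.+4 * (rr a0 a1 a2 m.+3 * (rr a0 a1 a2 m.+2 * 1))) := cfk 3 m.+1.
  have c3 : (B m.+3)`_m.+1 = x 2 * (rr a0 a1 a2 m.+3 * (rr a0 a1 a2 m.+2 * 1)) := cfk 2 m.+1.
  have c4 : (B m.+2)`_m.+1 = x 1 * (rr a0 a1 a2 m.+2 * 1) := cfk 1 m.+1.
  have c5 : (B m.+3)`_m.+2 = x 1 * (rr a0 a1 a2 m.+3 * 1) := cfk 1 m.+2.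
  have c6 : (B m.+4)`_m.+3 = x 1 * (rr a0 a1 a2 m.+4 * 1) := cfk 1 m.+3.
  have c7 : (B m.+4)`_m.+2 = x 2 * (rr a0 a1 a2 m.+4 * (rr a0 a1 a2 m.+3 * 1)) := cfk 2 m.+2.
  rewrite c1 c2 c3 c4 c5 c6 c7 in h.
  apply: (mul_eq0_r (rnz m.+2)); apply: (mul_eq0_r (rnz m.+1)).
  rewrite -[X in _ = X]h /E3f; ring.
have hx1 : x 1 = 0 := alg1 ha2 (E3 0) (E3 1) (E3 2).
have G4 : forall m, G4f a0 a1 a2 (x 2) (x 4) m = 0.
  move=> m; have h := rc m.+3 m isT.
  rewrite /gamma /beta in h.
  have c1 : (B m.+4)`_m = x 4 * (rr a0 a1 a2 m.+4 * (rr a0 a1 a2 m.+3 * (rr a0 a1 a2 m.+2 * (rr a0 a1 a2 m.+1 * 1)))) := cfk 4 m.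
  have c2 : (B m.+4.+1)`_m.+1 = x 4 * (rr a0 a1 a2 m.+4.+1 * (rr a0 a1 a2 m.+4 * (rr a0 a1 a2 m.+3 * (rr a0 a1 a2 m.+2 * 1)))) := cfk 4 m.+1.
  have c3 : (B m.+4)`_m.+1 = x 3 * (rr a0 a1 a2 m.+4 * (rr a0 a1 a2 m.+3 * (rr a0 a1 a2 m.+2 * 1))) := cfk 3 m.+1.
  have c4 : (B m.+3)`_m.+1 = x 2 * (rr a0 a1 a2 m.+3 * (rr a0 a1 a2 m.+2 * 1)) := cfk 2 m.+1.
  have c5 : (B m.+4)`_m.+3 = x 1 * (rr a0 a1 a2 m.+4 * 1) := cfk 1 m.+3.
  have c6 : (B m.+4.+1)`_m.+4 = x 1 * (rr a0 a1 a2 m.+4.+1 * 1) := cfk 1 m.+4.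
  have c7 : (B m.+4)`_m.+2 = x 2 * (rr a0 a1 a2 m.+4 * (rr a0 a1 a2 m.+3 * 1)) := cfk 2 m.+2.
  have c8 : (B m.+4.+1)`_m.+3 = x 2 * (rr a0 a1 a2 m.+4.+1 * (rr a0 a1 a2 m.+4 * 1)) := cfk 2 m.+3.
  rewrite c1 c2 c3 c4 c5 c6 c7 c8 hx1 in h.
  apply: (mul_eq0_r (rnz m.+3)); apply: (mul_eq0_r (rnz m.+2)); apply: (mul_eq0_r (rnz m.+1)).
  rewrite -[X in _ = X]h /G4f; ring.
have hx2 : x 2 = 0 := alg2 ha2 (G4 0) (G4 1) (G4 2).
have B0 : B 0 = 1.
  apply/polyP => i; rewrite coef1; case: i => [|i].
    by rewrite (B_lead _ hM).
  by rewrite (B_high hM (ltn0Sn i)).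
have B1 : B 1 = 'X.
  apply/polyP => i; rewrite coefX; case: i => [|[|i]].
  - have -> : (B 1)`_0 = x 1 * (rr a0 a1 a2 1 * 1) := cfk 1 0.
    by rewrite hx1 mul0r.
  - by rewrite (B_lead _ hM).
  - by rewrite (B_high hM (_ : 1 < i.+2)%N).
have B2 : B 2 = 'X^2.
  apply/polyP => i; rewrite coefXn; case: i => [|[|[|i]]].
  - have -> : (B 2)`_0 = x 2 * (rr a0 a1 a2 2 * (rr a0 a1 a2 1 * 1)) := cfk 2 0.
    by rewrite hx2 mul0r.
  - have -> : (B 2)`_1 = x 1 * (rr a0 a1 a2 2 * 1) := cfk 1 1.
    by rewrite hx1 mul0r.
  - by rewrite (B_lead _ hM).
  - by rewrite (B_high hM (_ : 2 < i.+3)%N).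
have h20 : u (B 2 * B 0) = 0 by apply: ho.
move: h20 (hn 1%N); rewrite B2 B0 B1 mulr1 -expr2 => ->.
by rewrite eqxx.
Qed.
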